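(* Assume (FWW) for a flow $\Phi_t$ on $\mathbb{R}^n$ and a $k$-cone $C$. Let $K\subset\mathbb{R}^n$ be a compact invariant set and let $\mathbb{R}^n=E_y\oplus F_y$, $y\in K$, be a $k$-exponential separation of $(\Phi_t,D\Phi_t)$ along $K$ associated with $C$. Then there exists a constant $\delta''>0$ such that $d(v,C)>\delta''$ for every $v\in\bigcup_{y\in K}(F_y\cap S)$, where $S$ is the unit sphere of $\mathbb{R}^n$ and $d(v,C)=\inf_{w\in C}\|v-w\|$.
   Context: A closed set $C\subset\mathbb{R}^n$ is a $k$-cone if $lv\in C$ for all $v\in C$, $l\in\mathbb{R}$, and the maximal dimension of a linear subspace contained in $C$ is $k$. $C$ is $k$-solid if there is a $k$-dimensional subspace $W$ with $W\setminus\{0\}\subset\operatorname{Int}C$. Write $x\sim y$ if $x-y\in C$ and $x\approx y$ if $x-y\in\operatorname{Int}C$. A flow $\Phi_t$ is strongly monotone with respect to a $k$-solid cone $C$ if $x\sim y$ implies $\Phi_t(x)\sim\Phi_t(y)$ for $t\ge0$, and $x\ne y$, $x\sim y$ imply $\Phi_t(x)\approx\Phi_t(y)$ for $t>0$. Assumption (FWW): the flow $\Phi_t$ on $\mathbb{R}^n$ is $C^{1,\alpha}$-smooth ($C^1$ with locally $\alpha$-Hölder derivative, $\alpha\in(0,1]$), strongly monotone with respect to the $k$-cone $C$, and $D_x\Phi_t(C\setminus\{0\})\subset\operatorname{Int}C$ for $t>0$. A $k$-exponential separation along a compact invariant set $K$ associated with $C$ consists of continuous (in the Grassmannian gap metric)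 families of $k$-dimensional subspaces $E_x$ and $(n-k)$-dimensional subspaces $F_x$, $x\in K$, such that: $\mathbb{R}^n=E_x\oplus F_x$; $D_x\Phi_tE_x=E_{\Phi_t(x)}$, $D_x\Phi_tF_x\subset F_{\Phi_t(x)}$ for $t>0$; there are $M>0$, $0<\gamma<1$ with $\|D_x\Phi_tw\|\le M\gamma^t\|D_x\Phi_tv\|$ for all $x\in K$, unit $w\in F_x$, unit $v\in E_x$, $t\ge0$; and $E_x\subset\operatorname{Int}C\cup\{0\}$, $F_x\cap C=\{0\}$. *)

(* Defs.v *)
(* R : realType, vectors of R^n are row vectors 'rV[R]_n,
   linear subspaces of R^n are row spaces of square matrices 'M[R]_n. *)
From HB Require Import structures.
From mathcomp Require Import all_boot all_order all_algebra.
From mathcomp Require Import all_classical all_reals all_analysis.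
Set Implicit Arguments. Unset Strict Implicit. Unset Printing Implicit Defensive.
Import Order.TTheory GRing.Theory Num.Theory.
Import numFieldNormedType.Exports.
Local Open Scope classical_set_scope.
Local Open Scope ring_scope.

Section Defs.
Variables (R : realType) (n : nat).
Local Notation V := 'rV[R]_n.

Definition enorm (v : V) : R := Num.sqrt (\sum_(i < n) (v ord0 i) ^+ 2).

Definition setdist (v : V) (A : set V) : R := inf [set enorm (v - w) | w in A].

Definition usphere : set V := [set v | enorm v = 1].

Definition subsp (U : 'M[R]_n) : set V := [set v | (v <= U)%MS].

Definition gap_half (U W : 'M[R]_n) : R :=
  sup [set setdist u (subsp W) | u in subsp U `&` usphere].
Definition gap (U W : 'M[R]_n) : R := Num.max (gap_half U W) (gap_half W U).

Definition kcone (k : nat) (C : set V) : Prop :=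
  [/\ closed C,
      (forall (l : R) v, C v -> C (l *: v)),
      (exists W : 'M[R]_n, \rank W = k /\ subsp W `<=` C) &
      (forall W : 'M[R]_n, subsp W `<=` C -> (\rank W <= k)%N)].

Definition ksolid (k : nat) (C : set V) : Prop :=
  exists W : 'M[R]_n, \rank W = k /\
    (forall v, (v <= W)%MS -> v != 0 -> interior C v).

(* Jacobian (as a matrix acting on row vectors) of x |-> Phi t x *)
Definition Dflow (Phi : R -> V -> V) (t : R) (x : V) : 'M[R]_n :=
  lin1_mx ('d (Phi t) x).

Definition is_flow (Phi : R -> V -> V) : Prop :=
  [/\ (forall x, Phi 0 x = x),
      (forall s t x, Phi (s + t) x = Phi s (Phi t (x))) &
      continuous (fun p : R * V => Phi p.1 p.2)].

Definition C1alpha (alpha : R) (Phi : R -> V -> V) : Prop :=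
  (forall t x, differentiable (Phi t) x) /\
  (forall t x0, exists r : R, exists L : R, 0 < r /\
     forall y z, enorm (y - x0) < r -> enorm (z - x0) < r ->
       `|Dflow Phi t y - Dflow Phi t z| <= L * powR (enorm (y - z)) alpha).

(* strongly monotone w.r.t. C  (x ~ y iff x - y in C, x ≈ y iff x - y in Int C) *)
Definition strongly_monotone (k : nat) (C : set V) (Phi : R -> V -> V) : Prop :=
  [/\ ksolid k C,
      (forall x y t, C (x - y) -> 0 <= t -> C (Phi t x - Phi t y)) &
      (forall x y t, x != y -> C (x - y) -> 0 < t ->
         interior C (Phi t x - Phi t y))].

Definition FWW (alpha : R) (k : nat) (C : set V) (Phi : R -> V -> V) : Prop :=
  [/\ is_flow Phi /\ (0 < alpha /\ alpha <= 1), C1alpha alpha Phi,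
      kcone k C, strongly_monotone k C Phi &
      (forall t x v, 0 < t -> C v -> v != 0 -> interior C (v *m Dflow Phi t x))].

Definition compact_invariant (Phi : R -> V -> V) (K : set V) : Prop :=
  compact K /\ (forall t, Phi t @` K = K).

Definition exp_separation (k : nat) (C : set V) (Phi : R -> V -> V) (K : set V)
    (E F : V -> 'M[R]_n) : Prop :=
  [/\
      (forall x, K x -> [/\ \rank (E x) = k, \rank (F x) = (n - k)%N,
                            ((E x + F x)%MS == (1%:M : 'M[R]_n))%MS &
                            ((E x :&: F x)%MS == (0 : 'M[R]_n))%MS]),
      (forall x, K x -> forall eps : R, 0 < eps -> exists d : R, 0 < d /\
         forall y, K y -> enorm (y - x) < d ->
           gap (E y) (E x) < eps /\ gap (F y) (F x) < eps),
      (forall x t, K x -> 0 < t ->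
         ((E x *m Dflow Phi t x) == E (Phi t x))%MS /\
         ((F x *m Dflow Phi t x) <= F (Phi t x))%MS),
      (exists M : R, exists gamma : R, [/\ 0 < M, 0 < gamma, gamma < 1 &
         forall x w v t, K x -> (w <= F x)%MS -> enorm w = 1 ->
           (v <= E x)%MS -> enorm v = 1 -> 0 <= t ->
           enorm (w *m Dflow Phi t x)
             <= M * powR gamma t * enorm (v *m Dflow Phi t x)]) &
      (forall x, K x ->
         (forall v, (v <= E x)%MS -> v != 0 -> interior C v) /\
         (forall v, (v <= F x)%MS -> C v -> v = 0))].

End Defs.

(* Main.v *)
Require Import Defs.
From HB Require Import structures.
From mathcomp Require Import all_boot all_order all_algebra.
From mathcomp Require Import all_classical all_reals all_analysis.
From mathcomp Require Import ring lra.
From Stdlib Require Import Classical.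
Import Order.TTheory GRing.Theory Num.Theory.
Import numFieldNormedType.Exports.
Local Open Scope classical_set_scope.
Local Open Scope ring_scope.
Set Implicit Arguments. Unset Strict Implicit.
Section Helpers.
Variables (R : realType) (n : nat).
Local Notation V := 'rV[R]_n.

Lemma entry_le p q (A : 'M[R]_(p, q)) i j : `|A i j| <= `|A|.
Proof.
rewrite [X in _ <= X]/Num.norm /= mx_normrE.
by apply/bigmax_geP; right => /=; exists (i, j).
Qed.
Arguments entry_le {p q}.

Lemma norm_ge0' p q (A : 'M[R]_(p, q)) : 0 <= `|A|.
Proof. exact: normr_ge0. Qed.

Lemma sum_sq_ge0 (v : V) : 0 <= \sum_(i < n) (v ord0 i) ^+ 2.
Proof. by apply: sumr_ge0 => i _; rewrite sqr_ge0. Qed.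

Lemma norm_le_enorm (v : V) : `|v| <= enorm v.
Proof.
rewrite [X in X <= _]/Num.norm /= mx_normrE.
apply/bigmax_leP; split; first exact: sqrtr_ge0.
move=> [i j] _ /=; rewrite (ord1 i).
rewrite -sqrtr_sqr /enorm; apply: ler_wsqrtr.
rewrite (bigD1 j) //= lerDl; apply: sumr_ge0 => k _; exact: sqr_ge0.
Qed.

Lemma enorm_le (v : V) : enorm v <= n%:R * `|v|.
Proof.
have h : \sum_(i < n) (v ord0 i) ^+ 2 <= (n%:R * `|v|) ^+ 2.
  apply: (@le_trans _ _ (\sum_(i < n) `|v| ^+ 2)).
    apply: ler_sum => i _; rewrite -(real_normK (num_real (v ord0 i))).
    have := entry_le v ord0 i; have := normr_ge0 (v ord0 i); nra.
  rewrite sumr_const card_ord -mulr_natl.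
  have hv := normr_ge0 v.
  have hn : (n%:R <= n%:R ^+ 2 :> R).
    rewrite -natrX ler_nat; case: (n) => // m.
    by rewrite expnS leq_pmulr // expn_gt0.
  rewrite exprMn; have h2 : 0 <= `|v| ^+ 2 by rewrite sqr_ge0.
  nra.
rewrite /enorm -(@ger0_norm _ (n%:R * `|v|)); last by rewrite mulr_ge0.
by rewrite -sqrtr_sqr; apply: ler_wsqrtr.
Qed.

Lemma enorm1_sum (v : V) : enorm v = 1 -> \sum_(i < n) (v ord0 i) ^+ 2 = 1.
Proof.
move=> h; rewrite -(@sqr_sqrtr _ (\sum_(i < n) (v ord0 i) ^+ 2)) ?sum_sq_ge0 //.
by rewrite -/(enorm v) h expr1n.
Qed.

Lemma enorm1_lb (v : V) : enorm v = 1 -> 1 <= n%:R * `|v|.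
Proof.
move=> h; apply: (@le_trans _ _ (\sum_(i < n) (v ord0 i) ^+ 2)).
  by rewrite (enorm1_sum h).
have hv : `|v| <= 1 by rewrite -h norm_le_enorm.
apply: (@le_trans _ _ (\sum_(i < n) `|v|)).
  apply: ler_sum => i _; rewrite -(real_normK (num_real (v ord0 i))).
  have := entry_le v ord0 i; have := normr_ge0 (v ord0 i); nra.
by rewrite sumr_const card_ord mulr_natl.
Qed.

Lemma enorm_n_gt0 (v : V) : enorm v = 1 -> (0 < n)%N.
Proof.
case: (posnP n) => // n0 /enorm1_sum.
rewrite big1 => [/eqP|i _]; first by rewrite eq_sym oner_eq0.
by have := ltn_ord i; rewrite {2}n0.
Qed.

Lemma mulmx_norm_le (x : V) (M : 'M[R]_n) : `|x *m M| <= n%:R * `|x| * `|M|.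
Proof.
rewrite [X in X <= _]/Num.norm /= mx_normrE.
apply/bigmax_leP; split; first by rewrite !mulr_ge0.
move=> [i j] _ /=; rewrite mxE.
apply: (le_trans (ler_norm_sum _ _ _)).
apply: (@le_trans _ _ (\sum_(k < n) `|x| * `|M|)).
  apply: ler_sum => k _; rewrite normrM; apply: ler_pM => //.
    exact: entry_le.
  exact: entry_le.
by rewrite sumr_const card_ord -mulrA mulr_natl.
Qed.

Lemma subsp_closedish (U : 'M[R]_n) (v : V) :
  (forall e, 0 < e -> exists w, (w <= U)%MS /\ `|v - w| < e) -> (v <= U)%MS.
Proof.
move=> H; rewrite submxE; apply/eqP; apply/eqP; rewrite -normr_eq0.
apply/negPn/negP => hne.
set a := `|v *m cokermx U|.
have a0 : 0 < a by rewrite normr_gt0 -normr_eq0.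
set c := n%:R * `|cokermx U| + 1.
have c0 : 0 < c by rewrite /c ltr_pwDr // mulr_ge0.
have [w [wU hw]] := H (a / c) (divr_gt0 a0 c0).
have e : v *m cokermx U = (v - w) *m cokermx U.
  move: wU; rewrite submxE => /eqP wU.
  by rewrite mulmxBl wU subr0.
have := mulmx_norm_le (v - w) (cokermx U).
rewrite -e -/a => ha.
have : a < a.
  apply: (le_lt_trans ha).
  have hm := normr_ge0 (cokermx U); have hvw := normr_ge0 (v - w).
  have : `|v - w| * c < a by rewrite -ltr_pdivlMr.
  rewrite /c; have hn : 0 <= n%:R :> R by [].
  nra.
by rewrite ltxx.
Qed.

Lemma closedish (C : set V) (v : V) : closed C ->
  (forall e, 0 < e -> exists w, C w /\ `|v - w| < e) -> C v.
Proof.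
move=> Ccl H; apply: Ccl => B /nbhs_ballP [e e0 hB].
have [w [Cw hw]] := H e e0; exists w; split => //; apply: hB.
by rewrite -ball_normE /ball_.
Qed.

Lemma setdist_le (u : V) (A : set V) w : A w -> setdist u A <= enorm (u - w).
Proof.
move=> Aw; apply: ge_inf; last by exists w.
by exists 0 => _ [x _ <-]; exact: sqrtr_ge0.
Qed.

Lemma gap_close (U W : 'M[R]_n) (u : V) e : (u <= U)%MS -> enorm u = 1 ->
  gap U W < e -> exists w, (w <= W)%MS /\ enorm (u - w) < e.
Proof.
move=> uU u1 hg.
have hd : setdist u (subsp W) < e.
  apply: le_lt_trans hg; apply: (@le_trans _ _ (gap_half U W)); last first.
    by rewrite /gap le_max lexx.
  apply: ub_le_sup; last by exists u.
  exists 1 => _ [u' [_ u'1] <-].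
  apply: le_trans (setdist_le u' (sub0mx _ W)) _.
  by rewrite subr0 u'1.
have [x [w Ww <-] hx] := inf_lt (ex_intro _ (enorm (u - 0)) (ex_intro2 _ _ 0 (sub0mx _ W) erefl)) hd.
by exists w.
Qed.

End Helpers.

Theorem lemma3p4 (R : realType) (n k : nat) (alpha : R) (C : set 'rV[R]_n)
    (Phi : R -> 'rV[R]_n -> 'rV[R]_n) (K : set 'rV[R]_n)
    (E F : 'rV[R]_n -> 'M[R]_n) :
  FWW alpha k C Phi ->
  compact_invariant Phi K ->
  exp_separation k C Phi K E F ->
  exists delta : R, 0 < delta /\
    forall y v, K y -> (v <= F y)%MS -> enorm v = 1 -> setdist v C > delta.
Proof.
move=> [_ _ [Ccl _ [W0 [_ W0C]] _] _ _] [Kc _] [_ Hgap _ _ Hpos].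
case: (pselect (exists d : R, 0 < d /\ forall y v w, K y -> (v <= F y)%MS ->
    enorm v = 1 -> C w -> d <= `|v - w|)) => [[d [d0 Hd]]|Hn].
  exists (d / 2); split; first by rewrite divr_gt0.
  move=> y v Ky Fv nv.
  have hd2 : d / 2 < d by lra.
  apply: lt_le_trans hd2 _.
  rewrite /setdist; apply: lb_le_inf.
    exists (enorm (v - 0)); exists 0 => //; apply: W0C; exact: sub0mx.
  move=> _ [w Cw <-]; apply: le_trans (norm_le_enorm _); exact: Hd Ky Fv nv Cw.
have Hbad : forall d, 0 < d -> exists y v w, [/\ K y, (v <= F y)%MS,
    enorm v = 1, C w & `|v - w| < d].
  move=> d d0; apply: NNPP => Hc; apply: Hn; exists d; split => //.
  move=> y v w Ky Fv nv Cw; rewrite leNgt; apply/negP => lt.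
  by apply: Hc; exists y, v, w.
have [y0 [v0 [w0 [Ky0 _ nv0 _ _]]]] := Hbad 1 ltr01.
have n0 := enorm_n_gt0 nv0.
have nR : 0 < n%:R :> R by rewrite ltr0n.
pose A d := [set p : 'rV[R]_n * 'rV[R]_n | [/\ K p.1, (p.2 <= F p.1)%MS,
  enorm p.2 = 1 & exists w, C w /\ `|p.2 - w| < d]].
pose G := filter_from [set d : R | 0 < d] A.
have GF : ProperFilter G.
  apply: filter_from_proper.
    apply: filter_from_filter; first by exists 1; rewrite /= ltr01.
    move=> i j i0 j0; exists (Num.min i j); first by rewrite /= lt_min i0 j0.
    move=> p [Kp Fp np [w [Cw hw]]]; rewrite lt_min in hw.
    case/andP: hw => hi hj.
    by split; split => //; exists w.
  move=> d d0; have [y [v [w [Ky Fv nv Cw hw]]]] := Hbad d d0.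
  by exists (y, v); split => //; exists w.
pose P := K `*` closed_ball (0 : 'rV[R]_n) 1.
have Pc : compact P.
  apply: compact_setX => //; apply: bounded_closed_compact; last first.
    exact: closed_ball_closed.
  rewrite closed_ballE //.
  exists 1; split => // M M1 x; rewrite /closed_ball_ /= sub0r normrN => hx.
  exact: le_trans hx (ltW M1).
have GP : G P.
  exists 1; first by rewrite /= ltr01.
  move=> p [Kp _ np _]; split => //.
  rewrite closed_ballE // /closed_ball_ /= sub0r normrN -np; exact: norm_le_enorm.
have [[ys vs] [[Kys Bvs] cl]] := Pc G GF GP.
have near : forall e, 0 < e -> exists y v w, [/\ K y, (v <= F y)%MS,
    enorm v = 1, C w & [/\ `|v - w| < e, `|ys - y| < e & `|vs - v| < e]].
  move=> e e0.
  have GA : G (A e) by exists e.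
  have [[y v] [[Ky Fv nv [w [Cw hw]]] hb]] := cl (A e) (ball (ys, vs) e) GA (nbhsx_ballx _ _ e0).
  case: hb => hb1 hb2.
  rewrite -ball_normE /ball_ /= in hb1 hb2.
  by exists y, v, w; split.
have Cvs : C vs.
  apply: closedish Ccl _ => e e0.
  have [y [v [w [_ _ _ Cw [hw _ hv]]]]] := near (e / 2) ltac:(by rewrite divr_gt0).
  exists w; split => //.
  have := ler_distD v vs w; lra.
have Fvs : (vs <= F ys)%MS.
  apply: subsp_closedish => e e0.
  have e2 : 0 < e / 2 by rewrite divr_gt0.
  have [d [d0 Hd]] := Hgap ys Kys (e / 2) e2.
  have dn : 0 < d / n%:R by rewrite divr_gt0.
  have [y [v [w [Ky Fv nv Cw [_ hy hv]]]]] := near (Num.min (e / 2) (d / n%:R)) ltac:(by rewrite lt_min e2 dn).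
  rewrite !lt_min in hy hv; case/andP: hy => _ hy; case/andP: hv => hv _.
  have hy' : enorm (y - ys) < d.
    apply: le_lt_trans (enorm_le _) _.
    rewrite distrC; move: hy; rewrite ltr_pdivlMr // mulrC //.
  have [_ hF] := Hd y Ky hy'.
  have [w' [Fw' hw']] := gap_close Fv nv hF.
  exists w'; split => //.
  have := ler_distD v vs w'; have := norm_le_enorm (v - w'); lra.
have vs0 : vs = 0 := (Hpos ys Kys).2 vs Fvs Cvs.
have h2n : 0 < 1 / (2 * n%:R) :> R by rewrite divr_gt0 // mulr_gt0.
have [y [v [w [_ _ nv _ [_ _ hv]]]]] := near _ h2n.
rewrite vs0 sub0r normrN ltr_pdivlMr ?mulr_gt0 // in hv.
have := enorm1_lb nv; nra.
Qed.
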